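(* If $G$ is a connected digraph that is not regular, then $\vec{\chi}(G) \leq \Delta_{max}(G)$.
   Context: Digraphs have no loops and no parallel arcs, but may contain digons. A digraph is connected if its underlying undirected graph is connected. A digraph is $k$-regular if $d^+(v)=d^-(v)=k$ for every vertex $v$; it is regular if it is $k$-regular for some $k$. $\vec{\chi}(G)$ is the dichromatic number (minimum number of colours in a colouring of $V(G)$ with no monochromatic directed cycle), and $\Delta_{max}(G)=\max_v \max(d^+(v),d^-(v))$. *)

(* Defs.v *)
(* A relation has no parallel arcs; loops are
   excluded by the hypothesis irreflexive a in the theorem; digons are allowed. *)
From mathcomp Require Import all_boot.
From mathcomp Require Import boolp.
Set Implicit Arguments. Unset Strict Implicit. Unset Printing Implicit Defensive.

Section Digraph.
Variables (V : finType) (a : rel V).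

Definition outdeg (v : V) : nat := #|[set y | a v y]|.
Definition indeg (v : V) : nat := #|[set y | a y v]|.

Definition kregular (k : nat) : Prop := forall v, outdeg v = k /\ indeg v = k.
Definition regular : Prop := exists k, kregular k.

Definition underlying : rel V := fun x y => a x y || a y x.
Definition connected : Prop := forall x y : V, connect underlying x y.

Definition Delta_max : nat := \max_(v : V) maxn (outdeg v) (indeg v).

Definition dicycle (p : seq V) : Prop := p != [::] /\ uniq p /\ cycle a p.

Definition acyclic_colouring (k : nat) (f : V -> 'I_k) : Prop :=
  forall p : seq V, dicycle p -> ~ (exists c : 'I_k, all (fun v => f v == c) p).

Definition colourable (k : nat) : bool :=
  `[< exists f : V -> 'I_k, acyclic_colouring f >].

(* dichromatic number: least k admitting an acyclic k-colouring (such a k <= #|V|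
   always exists for a loopless digraph; #|V| is the default otherwise) *)
Definition dichromatic : nat :=
  \big[minn/#|V|]_(k < #|V|.+1 | colourable k) k.

End Digraph.

(* Main.v *)
Require Import Defs.
From mathcomp Require Import all_boot.
From mathcomp Require Import boolp.
Set Implicit Arguments. Unset Strict Implicit. Unset Printing Implicit Defensive.

Definition acyc (V : finType) (a : rel V) k (f : V -> 'I_k) (S : {set V}) :=
  forall p, dicycle a p -> all (fun v => v \in S) p ->
    ~ exists c, all (fun v => f v == c) p.

Lemma acyc0 (V : finType) (a : rel V) k (f : V -> 'I_k) : acyc a f set0.
Proof.
move=> [|x p] [p0 _] //= /andP [H _]; by rewrite in_set0 in H.
Qed.

Lemma ext (V : finType) (a : rel V) k (f : V -> 'I_k) S v c :
  irreflexive a -> acyc a f S ->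
  ((forall y, y \in S -> a v y -> f y != c) \/
   (forall y, y \in S -> a y v -> f y != c)) ->
  acyc a (fun x => if x == v then c else f x) (v |: S).
Proof.
move=> irr Hf Hc p [p0 [up cp]] /allP Hp [c' /allP Hcol].
case vp: (v \in p).
- have Hv := Hcol v vp; rewrite eqxx in Hv; move/eqP: Hv => Hv; subst c'.
  case: Hc => Hc.
  + have yp : next p v \in p by rewrite mem_next.
    have avy : a v (next p v) := next_cycle cp vp.
    have yv : next p v != v by apply/eqP => E; rewrite E irr in avy.
    have yS : next p v \in S by have := Hp _ yp; rewrite in_setU1 (negbTE yv).
    have := Hcol _ yp; rewrite (negbTE yv) => /eqP E.
    by move: (Hc _ yS avy); rewrite E eqxx.
  + have yp : prev p v \in p by rewrite mem_prev.
    have avy : a (prev p v) v := prev_cycle cp vp.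
    have yv : prev p v != v by apply/eqP => E; rewrite E irr in avy.
    have yS : prev p v \in S by have := Hp _ yp; rewrite in_setU1 (negbTE yv).
    have := Hcol _ yp; rewrite (negbTE yv) => /eqP E.
    by move: (Hc _ yS avy); rewrite E eqxx.
- apply: (Hf p); first by split.
  + apply/allP => x xp; have := Hp x xp; rewrite in_setU1.
    case: eqP => [E|_ //]; by rewrite -E xp in vp.
  + exists c'; apply/allP => x xp; have := Hcol x xp.
    case: (x =P v) => [E|_ //]; by rewrite -E xp in vp.
Qed.

Lemma pick_col (V : finType) k (f : V -> 'I_k) (A : {set V}) :
  #|A| < k -> exists c : 'I_k, forall y, y \in A -> f y != c.
Proof.
move=> H.
case: (pickP (fun c => c \notin f @: A)) => [c Hc | H0].
  exists c => y yA; apply/eqP => E; by rewrite -E imset_f in Hc.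
have : #|'I_k| <= #|f @: A|.
  rewrite -cardsT; apply: subset_leq_card; apply/subsetP => c _.
  by move: (H0 c) => /negbFE.
move=> h2; have := leq_trans h2 (leq_imset_card f A).
by rewrite card_ord leqNgt H.
Qed.

Lemma cross (V : finType) (e : rel V) (S : {set V}) x r :
  x \in S -> r \notin S -> connect e x r ->
  exists u w, [/\ u \in S, w \notin S & e u w].
Proof.
move=> xS rS /connectP [p pth E]; subst r.
elim: p x xS pth rS => [|y p IH] x xS /=.
  by move=> _ H; rewrite xS in H.
case/andP => exy pth rS.
case yS: (y \in S); first exact: IH yS pth rS.
by exists x, y; split => //; rewrite yS.
Qed.

Lemma bigmin_le (I : eqType) (r : seq I) (P : pred I) (F : I -> nat) x i0 :
  i0 \in r -> P i0 -> \big[minn/x]_(i <- r | P i) F i <= F i0.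
Proof.
elim: r => // i r IH; rewrite in_cons big_cons => /orP [/eqP <- ->|/IH H /H].
  exact: geq_minl.
by case: (P i) => // h; exact: leq_trans (geq_minr _ _) h.
Qed.

Theorem lemma2 (V : finType) (a : rel V) :
  irreflexive a -> connected a -> ~ regular a ->
  dichromatic a <= Delta_max a.
Proof.
move=> irr conn nreg.
set D := Delta_max a.
have outD v : outdeg a v <= D.
  apply: leq_trans (leq_maxl _ (indeg a v)) _.
  by rewrite /D /Delta_max; apply: (leq_bigmax_cond (F := fun v => maxn (outdeg a v) (indeg a v)) v).
have inD v : indeg a v <= D.
  apply: leq_trans (leq_maxr (outdeg a v) _) _.
  by rewrite /D /Delta_max; apply: (leq_bigmax_cond (F := fun v => maxn (outdeg a v) (indeg a v)) v).
have [r Hr] : exists r, (outdeg a r < D) || (indeg a r < D).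
  case: (pickP (fun r => (outdeg a r < D) || (indeg a r < D))) => [r Hr|H].
    by exists r.
  exfalso; apply: nreg; exists D => v.
  have := H v; rewrite !ltnNge => /norP [/negbNE h1 /negbNE h2].
  by split; apply/eqP; rewrite eqn_leq ?h1 ?h2 ?outD ?inD.
have Dpos : 0 < D by case/orP: Hr => h; exact: leq_ltn_trans (leq0n _) h.
pose c0 := Ordinal Dpos.
have key : forall n (S : {set V}), #|S| <= n -> r \notin S ->
    exists f : V -> 'I_D, acyc a f S.
  elim=> [|n IH] S.
    rewrite leqn0 cards_eq0 => /eqP -> _; exists (fun _ => c0); exact: acyc0.
  move=> Sn rS; case: (set_0Vmem S) => [-> | [x xS]].
    exists (fun _ => c0); exact: acyc0.
  have [u [w [uS wS uw]]] := cross xS rS (conn x r).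
  have Sn' : #|S :\ u| <= n by move: Sn; rewrite (cardsD1 u S) uS add1n ltnS.
  have rS' : r \notin S :\ u by rewrite in_setD1 (negbTE rS) andbF.
  have [f Hf] := IH _ Sn' rS'.
  have wS' : w \notin S :\ u by rewrite in_setD1 (negbTE wS) andbF.
  have Hcnt : exists c, (forall y, y \in S :\ u -> a u y -> f y != c) \/
                        (forall y, y \in S :\ u -> a y u -> f y != c).
    case/orP: uw => h.
      have Hp : [set y in S :\ u | a u y] \proper [set y | a u y].
        apply/properP; split.
          by apply/subsetP => y; rewrite !inE => /andP [].
        by exists w; rewrite !inE ?h // (negbTE wS) andbF.
      have [c Hc] := pick_col f (leq_trans (proper_card Hp) (outD u)).
      by exists c; left => y yS ay; apply: Hc; rewrite inE yS ay.
    have Hp : [set y in S :\ u | a y u] \proper [set y | a y u].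
      apply/properP; split.
        by apply/subsetP => y; rewrite !inE => /andP [].
      by exists w; rewrite !inE ?h // (negbTE wS) andbF.
    have [c Hc] := pick_col f (leq_trans (proper_card Hp) (inD u)).
    by exists c; right => y yS ay; apply: Hc; rewrite inE yS ay.
  have [c Hc] := Hcnt.
  exists (fun x => if x == u then c else f x).
  by have := ext irr Hf Hc; rewrite setD1K.
have rT : r \notin [set: V] :\ r by rewrite in_setD1 eqxx.
have [f Hf] := key #|[set: V] :\ r| ([set: V] :\ r) (leqnn _) rT.
have Hcnt : exists c, (forall y, y \in [set: V] :\ r -> a r y -> f y != c) \/
                      (forall y, y \in [set: V] :\ r -> a y r -> f y != c).
  case/orP: Hr => h.
    have Hs : [set y in [set: V] :\ r | a r y] \subset [set y | a r y].
      by apply/subsetP => y; rewrite !inE => /andP [].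
    have [c Hc] := pick_col f (leq_ltn_trans (subset_leq_card Hs) h).
    by exists c; left => y yS ay; apply: Hc; rewrite inE yS ay.
  have Hs : [set y in [set: V] :\ r | a y r] \subset [set y | a y r].
    by apply/subsetP => y; rewrite !inE => /andP [].
  have [c Hc] := pick_col f (leq_ltn_trans (subset_leq_card Hs) h).
  by exists c; right => y yS ay; apply: Hc; rewrite inE yS ay.
have [c Hc] := Hcnt.
have Hf' := ext irr Hf Hc; rewrite setD1K ?in_setT // in Hf'.
have col : colourable a D.
  apply/asboolP; exists (fun x => if x == r then c else f x) => p dp.
  by apply: (Hf' p dp); apply/allP => x _; rewrite in_setT.
have DV : D < #|V|.+1.
  rewrite ltnS; apply/bigmax_leqP => v _; rewrite geq_max.
  by rewrite /outdeg /indeg !max_card.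
rewrite /dichromatic.
have := bigmin_le (P := fun k : 'I_#|V|.+1 => colourable a k) (fun k : 'I_#|V|.+1 => nat_of_ord k) #|V| (mem_index_enum (Ordinal DV)) col.
by [].
Qed.
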